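(* Let $G=(V,E,c)$ and $t:V\to\mathbb{R}_{\ge 0}$, and let $F$ and $(y_S)_{S\subseteq V}$ be the output forest and final growth values of shadow moat growing on $(G,t)$. Then for every vertex $v\in V$, $$c(F)\le 2\sum_{S\subseteq V,\ v\notin S} y_S .$$
   Context: $G=(V,E,c)$ is an undirected graph with edge costs $c:E\to\mathbb{R}_{\ge0}$; for $S\subseteq V$, $\delta(S)$ is the set of edges with exactly one endpoint in $S$, and $c(F)=\sum_{e\in F}c_e$. Shadow moat growing on $(G,t)$, for a ''fingerprint'' $t:V\to\mathbb{R}_{\ge0}$, is the following continuous process in time $\tau\ge 0$. It maintains a forest $F$ (initially empty), the partition of $V$ into connected components of $(V,F)$, and values $y_S\ge 0$ for all $S\subseteq V$ (initially $0$). At time $\tau$ a component $C$ is active iff it contains a vertex $w$ with $t_w>\tau$. Every active component $C$ increases $y_C$ at rate $1$; other $y_S$ stay fixed. Whenever an edge $e$ whose endpoints lie in different components satisfies $\sum_{S:\,e\in\delta(S)}y_S=c_e$, $e$ is added to $F$ and the two components merge (simultaneous events are processed one at a time by a fixed rule; edges whose endpoints are already in a common component are skipped). The process stops when no component is active. Finally, in a pruning phase, let $\mathcal D$ be the family of all vertex sets that were an inactive component at some moment; while some $S\in\mathcal D$ has $|\delta(S)\cap F|=1$, the unique edge of $\delta(S)\cap F$ is removed from $F$. The remaining $F$ is the output; $y_S$ denotes the final growth values. *)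

(* Defs.v *)
From mathcomp Require Import all_boot all_order all_algebra.
From mathcomp Require Import reals.
Set Implicit Arguments. Unset Strict Implicit. Unset Printing Implicit Defensive.
Import Order.TTheory GRing.Theory Num.Theory.
Local Open Scope ring_scope.

(* An undirected (multi)graph: vertex type V, edge type E, each edge e has
   endpoints src e and dst e (orientation irrelevant everywhere below). *)
Section ShadowMoat.
Variables (R : realType) (V E : finType) (src dst : E -> V).

Definition delta (S : {set V}) : {set E} :=
  [set e | (src e \in S) != (dst e \in S)].

Definition cost (c : E -> R) (F : {set E}) : R := \sum_(e in F) c e.

Definition adjF (F : {set E}) : rel V := fun x y =>
  [exists e in F, ((src e == x) && (dst e == y)) || ((src e == y) && (dst e == x))].

Definition comp (F : {set E}) (x : V) : {set V} := [set z | connect (adjF F) x z].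

Definition is_comp (F : {set E}) (S : {set V}) : bool := [exists x, S == comp F x].

Definition crossing (F : {set E}) (e : E) : bool :=
  ~~ connect (adjF F) (src e) (dst e).

Definition is_active (t : V -> R) (tau : R) (S : {set V}) : bool :=
  [exists w in S, tau < t w].

Definition load (y : {set V} -> R) (e : E) : R :=
  \sum_(S : {set V} | e \in delta S) y S.

(* growth values at time s, starting from values y at time a, while the
   partition is the one of (V,F) and the activity of every component is the
   one it has at time a: active components grow at rate 1. *)
Definition y_at (t : V -> R) (F : {set E}) (y : {set V} -> R) (a s : R)
  (S : {set V}) : R :=
  y S + (if is_comp F S && is_active t a S then s - a else 0).

(* One phase of the process: continuous growth on the time interval [a, b]
   with forest F (during which no component changes its activity, some
   component is active, and no edge between different components becomes
   tight before time b), followed at time b by either nothing or the addition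
   of one edge between different components that is tight at time b. *)
Definition moat_step (c : E -> R) (t : V -> R) (a b : R) (F F' : {set E})
  (y y' : {set V} -> R) : Prop :=
  [/\ a <= b /\ (forall S, y' S = y_at t F y a b S),
      (forall s, a <= s < b -> forall S, is_comp F S ->
          is_active t s S = is_active t a S),
      (forall s, a <= s < b -> exists S, is_comp F S && is_active t s S),
      (forall s, a <= s < b -> forall e, crossing F e ->
          load (y_at t F y a s) e < c e) &
      (F' = F \/ exists e, [/\ crossing F e, load y' e = c e & F' = e |: F])].

Definition moat_run (c : E -> R) (t : V -> R) (k : nat) (tau : nat -> R)
  (Fs : nat -> {set E}) (ys : nat -> {set V} -> R) : Prop :=
  [/\ tau 0%N = 0, Fs 0%N = set0, (forall S, ys 0%N S = 0),
      (forall i, (i < k)%N ->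
         moat_step c t (tau i) (tau i.+1) (Fs i) (Fs i.+1) (ys i) (ys i.+1)) &
      (forall S, is_comp (Fs k) S -> ~~ is_active t (tau k) S)].

(* The family D: vertex sets that were an inactive component at some moment.
   The components of Fs i exist during the time interval [tau i, tau (i+1)]
   (and, for i = k, at the final moment tau k). *)
Definition inD (t : V -> R) (k : nat) (tau : nat -> R) (Fs : nat -> {set E})
  (S : {set V}) : Prop :=
  exists i, [/\ (i <= k)%N, is_comp (Fs i) S &
    exists s, tau i <= s <= tau (minn i.+1 k) /\ ~~ is_active t s S].

Definition prune_step (D : {set V} -> Prop) (F F' : {set E}) : Prop :=
  exists S e, [/\ D S, #|delta S :&: F| = 1%N, e \in delta S :&: F & F' = F :\ e].

Inductive prune_seq (D : {set V} -> Prop) : {set E} -> {set E} -> Prop :=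
| prune_done F : ~ (exists F', prune_step D F F') -> prune_seq D F F
| prune_more F F' F'' : prune_step D F F' -> prune_seq D F' F'' -> prune_seq D F F''.

(* (F, y) is an output (forest, final growth values) of shadow moat growing
   on (G, t), for some order of processing simultaneous events. *)
Definition shadow_moat_output (c : E -> R) (t : V -> R) (F : {set E})
  (y : {set V} -> R) : Prop :=
  exists k tau Fs ys, [/\ moat_run c t k tau Fs ys,
     prune_seq (inD t k tau Fs) (Fs k) F & y = ys k].

End ShadowMoat.

(* Main.v *)
Require Import Defs.
From mathcomp Require Import all_boot all_order all_algebra zify.
From mathcomp Require Import reals.
Set Implicit Arguments. Unset Strict Implicit. Unset Printing Implicit Defensive.
Import Order.TTheory GRing.Theory Num.Theory.
Section G.
Variables (V E : finType) (src dst : E -> V).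
Implicit Types (X Y Fk Fi F Z : {set E}) (S C : {set V}).
Local Notation adj X := (adjF src dst X).
Local Notation cmp X x := (Defs.comp src dst X x).
Local Notation dl S := (delta src dst S).

Lemma adj_sym X : symmetric (adj X).
Proof.
move=> x y; apply/existsP/existsP => -[e /andP [eX H]]; exists e;
  by rewrite eX /= orbC.
Qed.

Lemma csym X : connect_sym (adj X).
Proof. exact: sym_connect_sym (adj_sym X). Qed.

Lemma adj_mono X Y : X \subset Y -> subrel (adj X) (adj Y).
Proof.
move=> /subsetP sXY x y /existsP [e /andP [eX H]]; apply/existsP; exists e.
by rewrite sXY.
Qed.

Lemma connect_mono X Y x y : X \subset Y -> connect (adj X) x y -> connect (adj Y) x y.
Proof.
move=> sXY; apply: connect_sub => a b /(adj_mono sXY) ab; exact: connect1.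
Qed.

Lemma in_cmp X x z : (z \in cmp X x) = connect (adj X) x z.
Proof. by rewrite inE. Qed.

Lemma cmp_self X x : x \in cmp X x.
Proof. by rewrite in_cmp connect0. Qed.

Lemma cmp_eq X x y : connect (adj X) x y -> cmp X x = cmp X y.
Proof.
move=> cxy; apply/setP => z; rewrite !in_cmp; exact: (same_connect (csym X) cxy).
Qed.

Lemma cmp_eqP X x y : (cmp X x = cmp X y) -> connect (adj X) x y.
Proof. by move=> H; rewrite -in_cmp H cmp_self. Qed.

Lemma cmp_mem X x y : y \in cmp X x -> cmp X x = cmp X y.
Proof. by rewrite in_cmp => /cmp_eq. Qed.

Lemma adj_edge X e : e \in X -> adj X (src e) (dst e).
Proof. by move=> eX; apply/existsP; exists e; rewrite eX !eqxx. Qed.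

Lemma cmp_closed X x e : e \in X -> (src e \in cmp X x) = (dst e \in cmp X x).
Proof.
move=> eX; rewrite !in_cmp; exact: (same_connect_r (csym X) (connect1 (adj_edge eX))).
Qed.

Lemma closure X (S : {set V}) x z :
  (forall e, e \in X -> (src e \in S) = (dst e \in S)) ->
  x \in S -> connect (adj X) x z -> z \in S.
Proof.
move=> H xS /connectP [p pth ->]; elim: p x xS pth => //= a p IH x xS /andP [axa pth].
apply: IH _ _ pth.
move/existsP: axa => [e /andP [eX /orP [/andP [/eqP ex /eqP ea]|/andP [/eqP ea /eqP ex]]]].
  by rewrite -ea -(H e eX) ex.
by rewrite -ea (H e eX) ex.
Qed.

Definition K X : {set {set V}} := [set cmp X x | x in V].
Definition kappa X := #|K X|.

Lemma cmp_add X e y :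
  cmp (e |: X) y =
  if connect (adj X) y (src e) || connect (adj X) y (dst e)
  then cmp X (src e) :|: cmp X (dst e) else cmp X y.
Proof.
have sub : X \subset e |: X by apply/subsetP => f fX; rewrite inE fX orbT.
have uw : connect (adj (e |: X)) (src e) (dst e).
  by apply: connect1; apply: adj_edge; exact: setU11.
case: ifP => Hy.
  apply/setP => z; apply/idP/idP.
    rewrite in_cmp; apply: closure; last by rewrite !inE (csym X (src e)) (csym X (dst e)).
    move=> f; rewrite in_setU1 => /orP [/eqP -> | fX].
      by rewrite !inE !connect0 orbT.
    by rewrite !inE -!in_cmp !(cmp_closed _ fX).
  have yu : connect (adj (e |: X)) y (src e).
    case/orP: Hy => H; first exact: connect_mono H.
    apply: connect_trans (connect_mono sub H) _; by rewrite csym.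
  rewrite !inE => /orP [] H; rewrite (connect_trans yu) //.
    exact: connect_mono H.
  exact: connect_trans uw (connect_mono sub H).
apply/setP => z; apply/idP/idP; last by rewrite !in_cmp; exact: connect_mono.
rewrite in_cmp; apply: closure; last exact: cmp_self.
move=> f; rewrite in_setU1 => /orP [/eqP -> | fX]; last exact: cmp_closed.
by rewrite !in_cmp; move/negbT: Hy; rewrite negb_or => /andP [/negbTE -> /negbTE ->].
Qed.

Lemma K_add X e :
  K (e |: X) = (K X :\ cmp X (src e) :\ cmp X (dst e)) :|: [set cmp X (src e) :|: cmp X (dst e)].
Proof.
apply/setP => C; apply/imsetP/idP.
  move=> [y _ ->]; rewrite cmp_add; case: ifP => H; first by rewrite !inE eqxx orbT.
  move/negbT: H; rewrite negb_or => /andP [Hu Hw].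
  rewrite !inE; apply/orP; left; apply/and3P; split;
    try (by apply/imsetP; exists y);
    by apply/negP => /eqP /cmp_eqP; apply/negP.
rewrite !inE => /orP [/and3P [Cw Cu /imsetP [y _ Cy]] | /eqP ->].
  exists y => //; rewrite cmp_add; case: ifP => // /orP [] /cmp_eq H.
    by rewrite Cy H eqxx in Cu.
  by rewrite Cy H eqxx in Cw.
exists (src e) => //; by rewrite cmp_add connect0.
Qed.

Lemma kappa_add X e :
  kappa X = (kappa (e |: X)) + (cmp X (src e) != cmp X (dst e)).
Proof.
rewrite /kappa K_add setUC cardsU1.
set u := cmp X (src e); set w := cmp X (dst e).
have uK : u \in K X by apply/imsetP; exists (src e).
have wK : w \in K X by apply/imsetP; exists (dst e).
have -> : (u :|: w \notin K X :\ u :\ w).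
  rewrite !inE; case Hin: (u :|: w \in K X); last by rewrite !andbF.
  move/imsetP: Hin => [y _ Hy].
  have : src e \in u :|: w by rewrite inE cmp_self.
  rewrite Hy => /cmp_mem Huy.
  have : dst e \in u :|: w by rewrite inE cmp_self orbT.
  rewrite Hy => /cmp_mem Hwy.
  have uw : u = w by rewrite /u /w -Huy -Hwy.
  by rewrite Huy eqxx andbF.
have H1 := cardsD1 u (K X).
have H2 := cardsD1 w (K X :\ u).
rewrite uK in H1.
have E2 : (w \in K X :\ u) = (w != u) by rewrite !inE wK andbT.
rewrite E2 in H2.
rewrite eq_sym in H2.
move: H1 H2; case: (u != w) => /= -> ->; [by rewrite addnC | by rewrite add0n addn0].
Qed.

Lemma kappa_le X : kappa X <= #|V|.
Proof. exact: leq_imset_card. Qed.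

Lemma cmp0 x : cmp set0 x = [set x].
Proof.
apply/setP => z; apply/idP/idP; last by rewrite inE => /eqP ->; exact: cmp_self.
rewrite in_cmp; apply: closure; last by rewrite inE.
by move=> e; rewrite in_set0.
Qed.

Lemma kappa0 : kappa set0 = #|V|.
Proof.
rewrite /kappa /K card_in_imset // => x y _ _; rewrite !cmp0 => H.
by apply/set1P; rewrite -H set11.
Qed.

Lemma kappa_ge X : #|V| <= kappa X + #|X|.
Proof.
have [n] := ubnP #|X|; elim: n X => // n IH X; rewrite ltnS => Hn.
case: (set_0Vmem X) => [-> | [e eX]]; first by rewrite kappa0 cards0 addn0.
have HX := cardsD1 e X; rewrite eX in HX.
have := IH (X :\ e); rewrite (kappa_add (X :\ e) e) setD1K //.
move: HX Hn; case: (_ != _) => /=; lia.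
Qed.

Definition forest Fk := forall X, X \subset Fk -> kappa X + #|X| <= #|V|.

Lemma forest0 : forest set0.
Proof. by move=> X; rewrite subset0 => /eqP ->; rewrite cards0 addn0 kappa_le. Qed.

Lemma forest_add Fk e : forest Fk -> ~~ connect (adj Fk) (src e) (dst e) ->
  forest (e |: Fk).
Proof.
move=> fF nc X /subsetP sX; case eX: (e \in X).
  have sX' : X :\ e \subset Fk.
    apply/subsetP => f; rewrite !inE => /andP [fe fX].
    by move: (sX f fX); rewrite !inE (negbTE fe).
  have := fF _ sX'; rewrite (kappa_add (X :\ e) e) setD1K //.
  have -> : (cmp (X :\ e) (src e) != cmp (X :\ e) (dst e)).
    apply/negP => /eqP /cmp_eqP /(connect_mono sX') H; by rewrite H in nc.
  have HX := cardsD1 e X; rewrite eX in HX.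
  move: HX => /= ->; lia.
apply: fF; apply/subsetP => f fX; move: (sX f fX); rewrite !inE => /orP [/eqP fe|//].
by rewrite fe eX in fX.
Qed.

Lemma card_sumb (T : finType) (Q P : pred T) :
  \sum_(x | Q x) (P x : nat) = #|[set x | Q x && P x]|.
Proof.
rewrite -sum1_card [RHS]big_mkcond [LHS]big_mkcond /=; apply: eq_bigr => x _.
by rewrite !inE; case: (Q x); case: (P x).
Qed.

Lemma sum_deg Fi Y :
  (forall e, e \in Y -> ~~ connect (adj Fi) (src e) (dst e)) ->
  \sum_(C in K Fi) #|dl C :&: Y| = 2 * #|Y|.
Proof.
move=> cr.
have E1 C : #|dl C :&: Y| = \sum_(e in Y) (e \in dl C : nat).
  rewrite card_sumb; apply: eq_card => e; by rewrite !inE andbC.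
rewrite (eq_bigr _ (fun C _ => E1 C)) exchange_big /=.
rewrite -sum1_card big_distrr /=; apply: eq_bigr => e eY.
rewrite card_sumb.
have -> : [set x | (x \in K Fi) && (e \in dl x)] = [set cmp Fi (src e); cmp Fi (dst e)].
  apply/setP => C; rewrite !inE; apply/andP/orP.
    move=> [/imsetP [y _ ->]]; case Hs: (src e \in cmp Fi y) => /=.
      by move=> _; left; apply/eqP; apply: cmp_mem.
    move=> Hd; right; apply/eqP; apply: cmp_eq; move: Hd; rewrite in_cmp; by case: (connect (adj Fi) y (dst e)).
  have cu : src e \in cmp Fi (dst e) = false.
    by rewrite in_cmp csym -in_cmp in_cmp; apply/negbTE; apply: cr.
  have cw : dst e \in cmp Fi (src e) = false.
    by rewrite in_cmp; apply/negbTE; apply: cr.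
  move=> [] /eqP ->; (split; first by apply/imsetP; eexists).
    by rewrite cmp_self cw.
  by rewrite cmp_self cu.
rewrite cards2 muln1.
have -> : cmp Fi (src e) != cmp Fi (dst e) by apply/negP => /eqP /cmp_eqP; apply/negP; apply: cr.
by [].
Qed.

Lemma cmp_iso Fi Z F y : Fi \subset Z -> (forall f, f \in Z -> f \in Fi \/ f \in F) ->
  dl (cmp Fi y) :&: F = set0 -> cmp Z y = cmp Fi y.
Proof.
move=> sFZ hZ h0; apply/setP => z; apply/idP/idP; last by rewrite !in_cmp; exact: connect_mono.
rewrite in_cmp; apply: closure; last exact: cmp_self.
move=> f fZ; case: (hZ f fZ) => [fFi | fF]; first exact: cmp_closed.
apply/eqP; apply/negPn/negP => H.
have : f \in dl (cmp Fi y) :&: F by rewrite !inE fF andbT; rewrite !inE in H.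
by rewrite h0 inE.
Qed.

Lemma phase_bound Fk Fi F (act : pred {set V}) v :
  forest Fk -> Fi \subset Fk -> F \subset Fk ->
  (forall e, e \in F -> e \notin Fi -> ~~ connect (adj Fi) (src e) (dst e)) ->
  (forall C, C \in K Fi -> ~~ act C -> #|dl C :&: F| != 1%N) ->
  \sum_(C in K Fi | act C) #|dl C :&: F| <= 2 * #|[set C in K Fi | act C && (v \notin C)]|.
Proof.
move=> fF sFi sF cr pr.
set deg := fun C => #|dl C :&: F|.
set Y := F :\: Fi.
have degY C : C \in K Fi -> deg C = #|dl C :&: Y|.
  move=> /imsetP [y _ ->]; apply: eq_card => e; rewrite !inE.
  case eF: (e \in F); rewrite ?andbF //= andbT.
  case eFi: (e \in Fi) => /=; last by rewrite andbT.
  by rewrite -!in_cmp (cmp_closed _ eFi) eqxx.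
have crY e : e \in Y -> ~~ connect (adj Fi) (src e) (dst e).
  by rewrite inE => /andP [H1 H2]; apply: cr.
have Hall : \sum_(C in K Fi) deg C = 2 * #|Y|.
  rewrite -(sum_deg crY); apply: eq_bigr => C CK; exact: degY.
set SA := \sum_(C in K Fi | act C) deg C.
set SI := \sum_(C in K Fi | ~~ act C) deg C.
have Hsplit : 2 * #|Y| = SA + SI by rewrite -Hall (bigID act) /=.
set N := [set C in K Fi | 0 < deg C].
set b := #|N :\: [set C | act C]|.
set a := #|N :&: [set C | act C]|.
have HSI : 2 * b <= SI.
  have -> : b = \sum_(C in K Fi | ~~ act C) (0 < deg C : nat).
    rewrite card_sumb; apply: eq_card => C; rewrite !inE; by case: (act C); case: (C \in K Fi).
  rewrite big_distrr /=; apply: leq_sum => C /andP [CK nC].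
  have := pr C CK nC; rewrite -/(deg C); case: (deg C) => [|[|n]] //.
have Hc : a <= #|[set C in K Fi | act C && (v \notin C)]|.+1.
  apply: (@leq_trans #|cmp Fi v |: [set C in K Fi | act C && (v \notin C)]|); last first.
    by rewrite cardsU1; case: (_ \notin _).
  apply: subset_leq_card; apply/subsetP => C; rewrite !inE => /andP [/andP [CK _] aC].
  case vC: (v \in C); last by rewrite CK aC orbT.
  move: CK vC => /imsetP [y _ ->] vC; by rewrite (cmp_mem vC) eqxx.
have HN : #|N| = a + b by rewrite /a /b cardsID.
case Y0: (#|Y| == 0%N).
  move/eqP: Y0 => Y0; rewrite Y0 muln0 in Hsplit.
  have -> : SA = 0%N by move: Hsplit; rewrite /SA; lia.
  by [].
have [e eY] : exists e, e \in Y.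
  by apply/card_gt0P; rewrite lt0n Y0.
have key : (#|Y|.+1 <= #|N|)%N.
  move: (eY); rewrite inE => /andP [eFi eF].
  set C1 := cmp Fi (src e).
  have C1N : C1 \in N.
    rewrite inE; apply/andP; split; first by apply/imsetP; exists (src e).
    apply/card_gt0P; exists e; rewrite !inE eF andbT -!in_cmp cmp_self.
    by rewrite in_cmp (negbTE (cr e eF eFi)).
  set Z := Fi :|: F.
  have sZ : Z \subset Fk by rewrite subUset sFi sF.
  have sFZ : Fi \subset Z by apply: subsetUl.
  have hZ f : f \in Z -> f \in Fi \/ f \in F by rewrite inE => /orP.
  have HZc : #|Z| = #|Fi| + #|Y|.
    have := cardsUI Fi F; have := cardsID Fi F; rewrite setIC -/Y -/Z; lia.
  have fZ := fF Z sZ.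
  have kg := kappa_ge Fi.
  have HK : #|K Fi| = #|N| + #|K Fi :\: N|.
    rewrite -(cardsID N (K Fi)); congr (_ + _); apply: eq_card => C.
    by rewrite !inE andbA andbb.
  have iso C : C \in K Fi :\: N -> C \in K Z.
    move=> /setDP [CK nN]; move: (CK) => /imsetP [y _ Cy]; apply/imsetP; exists y => //.
    rewrite (cmp_iso sFZ hZ) //; apply/eqP; rewrite -cards_eq0 -Cy.
    by move: nN; rewrite inE CK /= lt0n negbK.
  have HKZ : (#|K Fi :\: N|).+1 <= kappa Z.
    apply: (@leq_trans #|cmp Z (src e) |: (K Fi :\: N)|); last first.
      apply: subset_leq_card; apply/subsetP => C; rewrite in_setU1 => /orP [/eqP -> | ]; last exact: iso.
      by apply/imsetP; exists (src e).
    rewrite cardsU1; have -> // : cmp Z (src e) \notin K Fi :\: N.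
    apply/negP => H; move: (H) => /setDP [/imsetP [y _ Hy] nN].
    have : src e \in cmp Fi y by rewrite -Hy cmp_self.
    move/cmp_mem => Hy1; rewrite Hy Hy1 in nN.
    by rewrite C1N in nN.
  rewrite /kappa in HKZ fZ kg; lia.
lia.
Qed.

End G.
Section Run.
Variables (R : realType) (V E : finType) (src dst : E -> V).
Variables (c : E -> R) (t : V -> R) (k : nat) (tau : nat -> R)
  (Fs : nat -> {set E}) (ys : nat -> {set V} -> R).
Hypothesis Hrun : moat_run src dst c t k tau Fs ys.
Local Notation adj X := (adjF src dst X).
Local Notation cmp X x := (Defs.comp src dst X x).
Local Notation dl S := (delta src dst S).

Lemma iscK X S : is_comp src dst X S = (S \in K src dst X).
Proof.
apply/existsP/imsetP => [[x /eqP ->] | [x _ ->]]; exists x => //.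
Qed.

Local Open Scope ring_scope.

Definition wgt i S : R :=
  if is_comp src dst (Fs i) S && is_active t (tau i) S then tau i.+1 - tau i else 0.

Lemma stepP i : (i < k)%N ->
  moat_step src dst c t (tau i) (tau i.+1) (Fs i) (Fs i.+1) (ys i) (ys i.+1).
Proof. by case: Hrun => _ _ _ H _; apply: H. Qed.

Lemma tau_mono i : (i < k)%N -> tau i <= tau i.+1.
Proof. by move=> /stepP [[ab _] _ _ _ _]. Qed.

Lemma Fs_step i : (i < k)%N -> Fs i \subset Fs i.+1.
Proof.
move=> /stepP [_ _ _ _ [-> | [e [_ _ ->]]]] //; exact: subsetUr.
Qed.

Lemma Fs_sub i j : (i <= j)%N -> (j <= k)%N -> Fs i \subset Fs j.
Proof.
elim: j => [|j IH]; first by rewrite leqn0 => /eqP ->.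
rewrite leq_eqVlt => /orP [/eqP -> //| ij] jk.
apply: subset_trans (IH ij (ltnW jk)) (Fs_step jk).
Qed.

Lemma Fs_cross i j e : (i <= j)%N -> (j <= k)%N -> e \in Fs j -> e \notin Fs i ->
  ~~ connect (adj (Fs i)) (src e) (dst e).
Proof.
elim: j => [|j IH]; first by rewrite leqn0 => /eqP -> _ H; rewrite H.
rewrite leq_eqVlt => /orP [/eqP -> | ij] jk; first by move=> H; rewrite H.
case: (stepP jk) => _ _ _ _ [-> | [f [crf _ ->]]]; first exact: (IH ij (ltnW jk)).
rewrite in_setU1 => /orP [/eqP -> nFi | ]; last exact: (IH ij (ltnW jk)).
apply/negP => /(connect_mono (@Fs_sub i j ij (ltnW jk))) H.
by move: crf; rewrite /crossing H.
Qed.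

Lemma Fs_forest j : (j <= k)%N -> forest src dst (Fs j).
Proof.
elim: j => [|j IH jk]; first by case: Hrun => _ -> _ _ _ _; exact: forest0.
case: (stepP jk) => _ _ _ _ [-> | [f [crf _ ->]]]; first exact: IH (ltnW jk).
exact: forest_add (IH (ltnW jk)) crf.
Qed.

Lemma load_stable (X : {set E}) (y : {set V} -> R) (a b : R) e : e \in X ->
  load src dst (y_at src dst t X y a b) e = load src dst y e.
Proof.
move=> eX; apply: eq_bigr => S eS; rewrite /y_at.
case: ifP => [/andP [] | _]; last by rewrite addr0.
move=> /existsP [x /eqP SX]; move: eS; rewrite SX /delta in_set (cmp_closed _ _ x eX).
by rewrite eqxx.
Qed.

Lemma load_tight j e : (j <= k)%N -> e \in Fs j -> load src dst (ys j) e = c e.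
Proof.
elim: j => [|j IH jk]; first by case: Hrun => _ -> _ _ _ _; rewrite in_set0.
case: (stepP jk) => [[_ Hy] _ _ _ Had].
have El f : load src dst (ys j.+1) f =
    load src dst (y_at src dst t (Fs j) (ys j) (tau j) (tau j.+1)) f.
  by apply: eq_bigr => S _; rewrite Hy.
case: Had => [-> eF | [f [_ lf ->]]].
  by rewrite El load_stable // IH // ltnW.
rewrite in_setU1 => /orP [/eqP -> // | eF].
by rewrite El load_stable // IH // ltnW.
Qed.

Lemma ys_sum j S : (j <= k)%N -> ys j S = \sum_(i < j) wgt i S.
Proof.
elim: j => [|j IH jk]; first by case: Hrun => _ _ H _ _; rewrite big_ord0 H.
rewrite big_ord_recr /= -IH ?(ltnW jk) //.
by case: (stepP jk) => [[_ Hy] _ _ _ _]; rewrite Hy.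
Qed.

End Run.
Local Open Scope ring_scope.
Lemma prune_seqP (V E : finType) (D : {set V} -> Prop) (src dst : E -> V) (F0 F : {set E}) :
  prune_seq src dst D F0 F -> F \subset F0 /\ ~ (exists F', prune_step src dst D F F').
Proof.
elim => [F1 H | F1 F2 F3 [S [e [_ _ _ ->]]] _ [IH1 IH2]]; first by split.
split => //; apply: subset_trans IH1 _; exact: subD1set.
Qed.
Unset Implicit Arguments.
Theorem mainTheorem3 (R : realType) (V E : finType) (src dst : E -> V)
  (c : E -> R) (t : V -> R)
  (hc : forall e, 0 <= c e) (ht : forall v, 0 <= t v)
  (F : {set E}) (y : {set V} -> R) :
  shadow_moat_output src dst c t F y ->
  forall v : V, cost c F <= 2 * \sum_(S : {set V} | v \notin S) y S.
Proof.
move=> [k [tau [Fs [ys [Hrun Hpr ->]]]]] v.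
have [sF nopr] := prune_seqP Hpr.
set deg := fun S => #|delta src dst S :&: F|.
have E1 : cost c F = \sum_(S : {set V}) ys k S * (deg S)%:R.
  rewrite /cost (eq_bigr (fun e => load src dst (ys k) e)); last first.
    by move=> e eF; rewrite (load_tight Hrun (leqnn k) (subsetP sF e eF)).
  rewrite /load (eq_bigr (fun e => \sum_S (if e \in delta src dst S then ys k S else 0)));
    last by move=> e _; rewrite big_mkcond.
  rewrite exchange_big /=; apply: eq_bigr => S _.
  have -> : \sum_(e in F) (if e \in delta src dst S then ys k S else 0) =
            \sum_(e in delta src dst S :&: F) ys k S.
    rewrite big_mkcond [RHS]big_mkcond; apply: eq_bigr => e _.
    by rewrite in_setI; case: (e \in F); case: (e \in delta src dst S); rewrite ?andbF.
  by rewrite sumr_const mulr_natr.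
have E2 : \sum_(S : {set V}) ys k S * (deg S)%:R =
          \sum_(i < k) \sum_(S : {set V}) wgt src dst t tau Fs i S * (deg S)%:R.
  rewrite exchange_big /=; apply: eq_bigr => S _.
  by rewrite (ys_sum Hrun S (leqnn k)) mulr_suml.
have E3 : \sum_(S : {set V} | v \notin S) ys k S =
          \sum_(i < k) \sum_(S : {set V} | v \notin S) wgt src dst t tau Fs i S.
  rewrite exchange_big /=; apply: eq_bigr => S _.
  by rewrite (ys_sum Hrun S (leqnn k)).
rewrite E1 E2 E3 mulr_sumr; apply: ler_sum => [[i hi]] _ /=.
set act := fun S => is_active t (tau i) S.
set D := tau i.+1 - tau i.
have D0 : 0 <= D by rewrite subr_ge0 (tau_mono Hrun hi).
have L : \sum_(S : {set V}) wgt src dst t tau Fs i S * (deg S)%:R =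
    D * (\sum_(S in K src dst (Fs i) | act S) deg S)%:R.
  rewrite natr_sum mulr_sumr [RHS]big_mkcond; apply: eq_bigr => S _.
  by rewrite /wgt iscK /act; case: ifP; rewrite ?mul0r.
have Rr : \sum_(S : {set V} | v \notin S) wgt src dst t tau Fs i S =
    D * (#|[set S in K src dst (Fs i) | act S && (v \notin S)]|)%:R.
  rewrite -sum1_card natr_sum mulr_sumr big_mkcond [RHS]big_mkcond; apply: eq_bigr => S _.
  rewrite /wgt iscK inE /act.
  by case: (v \in S); case: (S \in K src dst (Fs i)); case: (is_active t (tau i) S);
    rewrite /= ?mulr1 ?mulr0.
rewrite L Rr mulrCA -natrM; apply: ler_wpM2l => //; rewrite ler_nat.
apply: (phase_bound _ (Fs_forest Hrun (leqnn k)) (Fs_sub Hrun (ltnW hi) (leqnn k)) sF).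
  by move=> e eF eFi; apply: (Fs_cross Hrun (ltnW hi) (leqnn k) (subsetP sF e eF) eFi).
move=> C CK nC; apply/negP => /eqP H1; apply: nopr.
have [e eC] : exists e, e \in delta src dst C :&: F by apply/card_gt0P; rewrite H1.
exists (F :\ e), C, e; split => //.
exists i; split; first exact: ltnW.
  by rewrite iscK.
exists (tau i); split => //.
by rewrite lexx /= (minn_idPl hi) (tau_mono Hrun hi).
Qed.
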